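(* Let $R:K\to H$ be an object of $\mathcal C'$. Then $(K,\cdot_K,1_K,\Delta,\epsilon,S_K,\rightharpoonup_R)$ with $a\rightharpoonup_R b:=R(a)\rightharpoonup b$ is a Yetter--Drinfeld post-Hopf algebra, and sending a morphism $(f,g)$ of $\mathcal C'$ to $g$ yields a functor $\mathsf R':\mathcal C'\to\mathcal{YD}\mathrm{PH}(\mathrm{Vec}_\Bbbk)$. Moreover $\mathsf R'$ is right adjoint to the functor $L:\mathcal{YD}\mathrm{PH}(\mathrm{Vec}_\Bbbk)\to\mathcal C'$ sending $(H,\rightharpoonup)$ to $\mathrm{Id}_H:H\to H_\rightharpoonup$ and $g$ to $(g,g)$: for all objects there is a natural bijection $\mathrm{Hom}_{\mathcal C'}\big(L(H',\rightharpoonup'),\,R\big)\cong\mathrm{Hom}_{\mathcal{YD}\mathrm{PH}}\big((H',\rightharpoonup'),\,\mathsf R'(R)\big)$, given by $(f,g)\mapsto g$ with inverse $g\mapsto(R\circ g,\,g)$.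
   Context: Conventions: $\Bbbk$ is a field; algebras are associative unital, coalgebras coassociative counital; Sweedler notation $\Delta(c)=c_1\otimes c_2$ (summation omitted), iterated as $c_1\otimes c_2\otimes c_3$ etc.; $H\otimes H$ carries the tensor product coalgebra structure. Definition (Yetter--Drinfeld post-Hopf algebra). A tuple $(H,\cdot,1,\Delta,\epsilon,S,\rightharpoonup)$ where $(H,\cdot,1)$ is an algebra, $(H,\Delta,\epsilon)$ is a coalgebra on the same vector space, $S:H\to H$ is linear with $x_1\cdot S(x_2)=S(x_1)\cdot x_2=\epsilon(x)1$ for all $x$, and $\rightharpoonup:H\otimes H\to H$ is a coalgebra morphism, such that for all $x,y,z\in H$: (P1) $x\rightharpoonup(y\cdot z)=(x_1\rightharpoonup y)\cdot(x_2\rightharpoonup z)$; (P2) $x\rightharpoonup(y\rightharpoonup z)=\big(x_1\cdot(x_2\rightharpoonup y)\big)\rightharpoonup z$; (P3) the map $\alpha_\rightharpoonup:H\to\mathrm{End}(H)$, $\alpha_\rightharpoonup(x)(y)=x\rightharpoonup y$, is convolution invertible, i.e. there is $\beta_\rightharpoonup:H\to\mathrm{End}(H)$ with $\alpha_\rightharpoonup(x_1)\circ\beta_\rightharpoonup(x_2)=\beta_\rightharpoonup(x_1)\circ\alpha_\rightharpoonup(x_2)=\epsilon(x)\mathrm{Id}_H$; (P4) $\epsilon(a\cdot b)=\epsilon(a)\epsilon(b)$, $\epsilon(1)=1_\Bbbk$, $\Delta(1)=1\otimes 1$; (P5) $\Delta(x\cdot y)=\Big(x_1\cdot\alpha_\rightharpoonup(x_2)\big(\beta_\rightharpoonup(x_4)(y_1)\big)\Big)\otimes(x_3\cdot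 y_2)$; (P6) setting $x\bullet_\rightharpoonup y:=x_1\cdot(x_2\rightharpoonup y)$, $S_\rightharpoonup(x):=\beta_\rightharpoonup(x_1)(S(x_2))$ and $x\leftharpoonup y:=\big(S_\rightharpoonup(x_1\rightharpoonup y_1)\bullet_\rightharpoonup x_2\big)\bullet_\rightharpoonup y_2$, one has $\Delta(S_\rightharpoonup(x))=S_\rightharpoonup(x_2)\otimes S_\rightharpoonup(x_1)$ and $(x_1\rightharpoonup y_1)\otimes(x_2\leftharpoonup y_2)=(x_2\rightharpoonup y_2)\otimes(x_1\leftharpoonup y_1)$. A morphism of Yetter--Drinfeld post-Hopf algebras $(H,\rightharpoonup)\to(H',\rightharpoonup')$ is an algebra and coalgebra morphism $g$ with $g(x\rightharpoonup y)=g(x)\rightharpoonup' g(y)$; these form $\mathcal{YD}\mathrm{PH}(\mathrm{Vec}_\Bbbk)$. The subadjacent Hopf algebra is $H_\rightharpoonup=(H,\bullet_\rightharpoonup,1,\Delta,\epsilon,S_\rightharpoonup)$, and $H$ is a Hopf monoid in ${}^{H_\rightharpoonup}_{H_\rightharpoonup}\mathcal{YD}$ via action $\rightharpoonup$ and coaction $a\mapsto a_1\bullet_\rightharpoonup S_\rightharpoonup(a_3)\otimes a_2$. Yetter--Drinfeld modules: for a Hopf algebra $A$ with antipode $T$, a left-left Yetter--Drinfeld module is a left $A$-module $(V,\triangleright)$ and left $A$-comodule $\rho(v)=v_{-1}\otimes v_0$ with $\rho(a\triangleright v)=a_1v_{-1}T(a_3)\otimes a_2\triangleright v_0$; these form the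 braided monoidal category ${}^A_A\mathcal{YD}$ with braiding $\sigma(v\otimes w)=v_{-1}\triangleright w\otimes v_0$. A bimonoid in ${}^A_A\mathcal{YD}$ is an object with algebra and coalgebra structure maps in ${}^A_A\mathcal{YD}$, $\epsilon$ multiplicative, $\epsilon(1)=1$, $\Delta(1)=1\otimes1$, and $\Delta\circ m=(m\otimes m)(\mathrm{Id}\otimes\sigma\otimes\mathrm{Id})(\Delta\otimes\Delta)$; a Hopf monoid is a bimonoid with antipode. Definition (Yetter--Drinfeld relative pre-Rota--Baxter operator). Let $(H,\cdot,1,\Delta,\epsilon,S_H)$ be a Hopf algebra and $(K,\cdot_K,1_K,\Delta,\epsilon)$ a bimonoid in ${}^H_H\mathcal{YD}$ with $H$-action $\rightharpoonup$. A coalgebra morphism $R:K\to H$ is a Yetter--Drinfeld relative pre-Rota--Baxter operator if for all $a,b\in K$: (RB1) $R(a)\cdot R(b)=R\big(a_1\cdot_K(R(a_2)\rightharpoonup b)\big)$; (RB2) $S_HR(R(a_1)\rightharpoonup b_1)\cdot R(a_2)\cdot R(b_2)\otimes R(R(a_3)\rightharpoonup b_3)=S_HR(R(a_2)\rightharpoonup b_2)\cdot R(a_3)\cdot R(b_3)\otimes R(R(a_1)\rightharpoonup b_1)$. A morphism from $R:K\to H$ to $R':K'\to H'$ is a pair $(f:H\to H',g:K\to K')$ of algebra and coalgebra morphisms with $fR=R'g$ and $g(h\rightharpoonup k)=f(h)\rightharpoonup' g(k)$. $\mathcal C'$ is the full subcategory of Yetter--Drinfeld relative pre-Rota--Baxter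 operators whose objects are the injective $R:K\to H$ such that $K$ is a Hopf monoid in ${}^H_H\mathcal{YD}$ (with antipode $S_K$) and the $H$-coaction on $K$ is $a\mapsto R(a_1)\cdot S_H(R(a_3))\otimes a_2$. (For $(H,\rightharpoonup)$ a Yetter--Drinfeld post-Hopf algebra, $\mathrm{Id}_H:H\to H_\rightharpoonup$ is an object of $\mathcal C'$.) *)

(* Defs.v *)
(* Tensors are represented as formal sums of elementary tensors (seq of pairs /
   triples); equality in V (x) W is the universal-property equality: two formal
   sums are equal iff every bilinear map (into every k-vector space) takes the
   same value on them.  Sweedler sums are sums over these formal sums. *)
From HB Require Import structures.
From mathcomp Require Import all_boot all_algebra.
From Stdlib Require Import ClassicalEpsilon.
Set Implicit Arguments. Unset Strict Implicit. Unset Printing Implicit Defensive.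
Import GRing.Theory.
Local Open Scope ring_scope.

Section YD.
Variable k : fieldType.

Definition lin (V W : lmodType k) (f : V -> W) : Prop :=
  forall (a : k) (x y : V), f (a *: x + y) = a *: f x + f y.
Definition bilin (V W U : lmodType k) (b : V -> W -> U) : Prop :=
  (forall x, lin (b x)) /\ (forall y, lin (fun x => b x y)).
Definition trilin (V1 V2 V3 U : lmodType k) (t : V1 -> V2 -> V3 -> U) : Prop :=
  (forall x y, lin (t x y)) /\ (forall x z, lin (fun y => t x y z)) /\
  (forall y z, lin (fun x => t x y z)).

Definition teq2 (V W : lmodType k) (s t : seq (V * W)) : Prop :=
  forall (U : lmodType k) (b : V -> W -> U), bilin b ->
    \sum_(p <- s) b p.1 p.2 = \sum_(p <- t) b p.1 p.2.
Definition teq3 (V1 V2 V3 : lmodType k) (s t : seq (V1 * V2 * V3)) : Prop :=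
  forall (U : lmodType k) (c : V1 -> V2 -> V3 -> U), trilin c ->
    \sum_(p <- s) c p.1.1 p.1.2 p.2 = \sum_(p <- t) c p.1.1 p.1.2 p.2.
Definition tscale (V W : lmodType k) (a : k) (s : seq (V * W)) : seq (V * W) :=
  [seq (a *: p.1, p.2) | p <- s].
Definition tlin (V W U : lmodType k) (f : V -> seq (W * U)) : Prop :=
  forall a x y, teq2 (f (a *: x + y)) (tscale a (f x) ++ f y).

(* x1 (x) x2 (x) x3 := (Delta (x) id) Delta x *)
Definition sw3 (V : lmodType k) (cop : V -> seq (V * V)) (x : V) : seq (V * V * V) :=
  flatten [seq [seq (q.1, q.2, p.2) | q <- cop p.1] | p <- cop x].
(* (id (x) Delta) Delta x *)
Definition sw3r (V : lmodType k) (cop : V -> seq (V * V)) (x : V) : seq (V * V * V) :=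
  flatten [seq [seq (p.1, q.1, q.2) | q <- cop p.2] | p <- cop x].
Definition sw4 (V : lmodType k) (cop : V -> seq (V * V)) (x : V) : seq (V * V * V * V) :=
  flatten [seq [seq (q.1, q.2, p.1.2, p.2) | q <- cop p.1.1] | p <- sw3 cop x].

Definition is_alg (V : lmodType k) (mul : V -> V -> V) (one : V) : Prop :=
  bilin mul /\ (forall x y z, mul x (mul y z) = mul (mul x y) z) /\
  (forall x, mul one x = x /\ mul x one = x).

Definition is_coalg (V : lmodType k) (cop : V -> seq (V * V)) (eps : V -> k) : Prop :=
  lin (eps : V -> k^o) /\ tlin cop /\ (forall x, teq3 (sw3 cop x) (sw3r cop x)) /\
  (forall x, \sum_(p <- cop x) eps p.1 *: p.2 = x /\ \sum_(p <- cop x) eps p.2 *: p.1 = x).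

Definition is_antipode (V : lmodType k) (mul : V -> V -> V) (one : V)
    (cop : V -> seq (V * V)) (eps : V -> k) (S : V -> V) : Prop :=
  lin S /\ forall x, \sum_(p <- cop x) mul p.1 (S p.2) = eps x *: one /\
                     \sum_(p <- cop x) mul (S p.1) p.2 = eps x *: one.

Definition unit_counit_compat (V : lmodType k) (mul : V -> V -> V) (one : V)
    (cop : V -> seq (V * V)) (eps : V -> k) : Prop :=
  (forall a b, eps (mul a b) = eps a * eps b) /\ eps one = 1 /\
  teq2 (cop one) [:: (one, one)].

Definition is_hopf (V : lmodType k) (mul : V -> V -> V) (one : V)
    (cop : V -> seq (V * V)) (eps : V -> k) (S : V -> V) : Prop :=
  is_alg mul one /\ is_coalg cop eps /\ unit_counit_compat mul one cop eps /\
  (forall x y, teq2 (cop (mul x y)) [seq (mul p.1 q.1, mul p.2 q.2) | p <- cop x, q <- cop y]) /\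
  is_antipode mul one cop eps S.

Definition alg_hom (V W : lmodType k) (mulV : V -> V -> V) (oneV : V)
    (mulW : W -> W -> W) (oneW : W) (g : V -> W) : Prop :=
  lin g /\ (forall x y, g (mulV x y) = mulW (g x) (g y)) /\ g oneV = oneW.

Definition coalg_hom (V W : lmodType k) (copV : V -> seq (V * V)) (epsV : V -> k)
    (copW : W -> seq (W * W)) (epsW : W -> k) (g : V -> W) : Prop :=
  lin g /\ (forall x, teq2 (copW (g x)) [seq (g p.1, g p.2) | p <- copV x]) /\
  (forall x, epsW (g x) = epsV x).

(* m : V (x) V -> V (given as a bilinear map) is a coalgebra morphism, where
   V (x) V carries the tensor product coalgebra structure *)
Definition coalg_hom2 (V : lmodType k) (cop : V -> seq (V * V)) (eps : V -> k)
    (m : V -> V -> V) : Prop :=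
  bilin m /\
  (forall x y, teq2 (cop (m x y)) [seq (m p.1 q.1, m p.2 q.2) | p <- cop x, q <- cop y]) /\
  (forall x y, eps (m x y) = eps x * eps y).

Local Unset Implicit Arguments.
Record YDPHData := {
  Pc : lmodType k;
  Pmul : Pc -> Pc -> Pc;
  Pone : Pc;
  Pcop : Pc -> seq (Pc * Pc);
  Peps : Pc -> k;
  PS : Pc -> Pc;
  Pact : Pc -> Pc -> Pc }.
Local Set Implicit Arguments.

Definition conv_inv (V : lmodType k) (cop : V -> seq (V * V)) (eps : V -> k)
    (act beta : V -> V -> V) : Prop :=
  bilin beta /\
  forall x y, \sum_(p <- cop x) act p.1 (beta p.2 y) = eps x *: y /\
              \sum_(p <- cop x) beta p.1 (act p.2 y) = eps x *: y.

Definition bullet (V : lmodType k) (mul : V -> V -> V) (cop : V -> seq (V * V))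
    (act : V -> V -> V) (x y : V) : V :=
  \sum_(p <- cop x) mul p.1 (act p.2 y).
Definition Sharp (V : lmodType k) (cop : V -> seq (V * V)) (S : V -> V)
    (beta : V -> V -> V) (x : V) : V :=
  \sum_(p <- cop x) beta p.1 (S p.2).
Definition lharp (V : lmodType k) (mul : V -> V -> V) (cop : V -> seq (V * V))
    (S : V -> V) (act beta : V -> V -> V) (x y : V) : V :=
  \sum_(p <- cop x) \sum_(q <- cop y)
     bullet mul cop act (bullet mul cop act (Sharp cop S beta (act p.1 q.1)) p.2) q.2.

Definition is_YDPH_ops (V : lmodType k) (mul : V -> V -> V) (one : V)
    (cop : V -> seq (V * V)) (eps : V -> k) (S : V -> V) (act : V -> V -> V) : Prop :=
  is_alg mul one /\ is_coalg cop eps /\ is_antipode mul one cop eps S /\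
  coalg_hom2 cop eps act /\
  (forall x y z, act x (mul y z) = \sum_(p <- cop x) mul (act p.1 y) (act p.2 z)) /\
  (forall x y z, act x (act y z) = act (bullet mul cop act x y) z) /\
  unit_counit_compat mul one cop eps /\
  (* (P3): a convolution inverse beta exists; (P5), (P6) are stated with it
     (it is unique) *)
  exists beta : V -> V -> V, conv_inv cop eps act beta /\
    (forall x y, teq2 (cop (mul x y))
       [seq (mul p.1.1.1 (act p.1.1.2 (beta p.2 q.1)), mul p.1.2 q.2)
          | p <- sw4 cop x, q <- cop y]) /\
    (forall x, teq2 (cop (Sharp cop S beta x))
                    [seq (Sharp cop S beta p.2, Sharp cop S beta p.1) | p <- cop x]) /\
    (forall x y, teq2
       [seq (act p.1 q.1, lharp mul cop S act beta p.2 q.2) | p <- cop x, q <- cop y]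
       [seq (act p.2 q.2, lharp mul cop S act beta p.1 q.1) | p <- cop x, q <- cop y]).

Definition is_YDPH (P : YDPHData) : Prop :=
  is_YDPH_ops (Pmul P) (Pone P) (Pcop P) (Peps P) (PS P) (Pact P).

Definition YDPH_hom (P Q : YDPHData) (g : Pc P -> Pc Q) : Prop :=
  alg_hom (Pmul P) (Pone P) (Pmul Q) (Pone Q) g /\
  coalg_hom (Pcop P) (Peps P) (Pcop Q) (Peps Q) g /\
  (forall x y, g (Pact P x y) = Pact Q (g x) (g y)).

Definition is_YDmod (A V : lmodType k) (mulA : A -> A -> A) (oneA : A)
    (copA : A -> seq (A * A)) (epsA : A -> k) (SA : A -> A)
    (act : A -> V -> V) (coact : V -> seq (A * V)) : Prop :=
  bilin act /\ (forall v, act oneA v = v) /\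
  (forall a b v, act (mulA a b) v = act a (act b v)) /\
  tlin coact /\
  (forall v, teq3 (flatten [seq [seq (q.1, q.2, p.2) | q <- copA p.1] | p <- coact v])
                  (flatten [seq [seq (p.1, q.1, q.2) | q <- coact p.2] | p <- coact v])) /\
  (forall v, \sum_(p <- coact v) epsA p.1 *: p.2 = v) /\
  (forall a v, teq2 (coact (act a v))
     [seq (mulA (mulA p.1.1 q.1) (SA p.2), act p.1.2 q.2) | p <- sw3 copA a, q <- coact v]).

(* K is a Hopf monoid in the braided category  ^A_A YD  (braiding
   sigma(v (x) w) = v_{-1} -> w (x) v_0) *)
Definition is_YDHopf_monoid (A K : lmodType k) (mulA : A -> A -> A) (oneA : A)
    (copA : A -> seq (A * A)) (epsA : A -> k) (SA : A -> A)
    (act : A -> K -> K) (coact : K -> seq (A * K))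
    (mulK : K -> K -> K) (oneK : K) (copK : K -> seq (K * K)) (epsK : K -> k)
    (SK : K -> K) : Prop :=
  is_YDmod mulA oneA copA epsA SA act coact /\
  is_alg mulK oneK /\ is_coalg copK epsK /\
  (forall h a b, act h (mulK a b) = \sum_(p <- copA h) mulK (act p.1 a) (act p.2 b)) /\
  (forall a b, teq2 (coact (mulK a b))
                    [seq (mulA p.1 q.1, mulK p.2 q.2) | p <- coact a, q <- coact b]) /\
  (forall h, act h oneK = epsA h *: oneK) /\ teq2 (coact oneK) [:: (oneA, oneK)] /\
  (forall h a, teq2 (copK (act h a))
                    [seq (act p.1 q.1, act p.2 q.2) | p <- copA h, q <- copK a]) /\
  (forall a, teq3 (flatten [seq [seq (p.1, q.1, q.2) | q <- copK p.2] | p <- coact a])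
                  (flatten [seq [seq (mulA p.1 q.1, p.2, q.2)
                                   | p <- coact r.1, q <- coact r.2] | r <- copK a])) /\
  (forall h a, epsK (act h a) = epsA h * epsK a) /\
  (forall a, \sum_(p <- coact a) epsK p.2 *: p.1 = epsK a *: oneA) /\
  unit_counit_compat mulK oneK copK epsK /\
  (forall a b, teq2 (copK (mulK a b))
     (flatten [seq [seq (mulK p.1 (act r.1 q.1), mulK r.2 q.2)
                      | r <- coact p.2, q <- copK b] | p <- copK a])) /\
  is_antipode mulK oneK copK epsK SK /\
  (forall h a, act h (SK a) = SK (act h a)) /\
  (forall a, teq2 (coact (SK a)) [seq (p.1, SK p.2) | p <- coact a]).

Local Unset Implicit Arguments.
Record RBData := {
  Hc : lmodType k;
  Hmul : Hc -> Hc -> Hc;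
  Hone : Hc;
  Hcop : Hc -> seq (Hc * Hc);
  Heps : Hc -> k;
  HS : Hc -> Hc;
  Kc : lmodType k;
  Kmul : Kc -> Kc -> Kc;
  Kone : Kc;
  Kcop : Kc -> seq (Kc * Kc);
  Keps : Kc -> k;
  KS : Kc -> Kc;
  Kact : Hc -> Kc -> Kc;
  Rop : Kc -> Hc }.
Local Set Implicit Arguments.

(* the coaction imposed in C':  a |-> R(a1) S_H(R(a3)) (x) a2 *)
Definition Kcoact (O : RBData) (a : Kc O) : seq (Hc O * Kc O) :=
  [seq (Hmul O (Rop O p.1.1) (HS O (Rop O p.2)), p.1.2) | p <- sw3 (Kcop O) a].

Definition RB1 (O : RBData) : Prop :=
  forall a b, Hmul O (Rop O a) (Rop O b)
            = Rop O (\sum_(p <- Kcop O a) Kmul O p.1 (Kact O (Rop O p.2) b)).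
Definition RB2 (O : RBData) : Prop :=
  let R := Rop O in let m := Hmul O in let S := HS O in let act := Kact O in
  forall a b, teq2
    [seq (m (m (S (R (act (R p.1.1) q.1.1))) (R p.1.2)) (R q.1.2), R (act (R p.2) q.2))
       | p <- sw3 (Kcop O) a, q <- sw3 (Kcop O) b]
    [seq (m (m (S (R (act (R p.1.2) q.1.2))) (R p.2)) (R q.2), R (act (R p.1.1) q.1.1))
       | p <- sw3 (Kcop O) a, q <- sw3 (Kcop O) b].

Definition in_Cprime (O : RBData) : Prop :=
  is_hopf (Hmul O) (Hone O) (Hcop O) (Heps O) (HS O) /\
  is_YDHopf_monoid (Hmul O) (Hone O) (Hcop O) (Heps O) (HS O) (Kact O) (@Kcoact O)
                   (Kmul O) (Kone O) (Kcop O) (Keps O) (KS O) /\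
  coalg_hom (Kcop O) (Keps O) (Hcop O) (Heps O) (Rop O) /\
  injective (Rop O) /\ RB1 O /\ RB2 O.

Definition Cmor (O1 O2 : RBData) (f : Hc O1 -> Hc O2) (g : Kc O1 -> Kc O2) : Prop :=
  alg_hom (Hmul O1) (Hone O1) (Hmul O2) (Hone O2) f /\
  coalg_hom (Hcop O1) (Heps O1) (Hcop O2) (Heps O2) f /\
  alg_hom (Kmul O1) (Kone O1) (Kmul O2) (Kone O2) g /\
  coalg_hom (Kcop O1) (Keps O1) (Kcop O2) (Keps O2) g /\
  (forall a, f (Rop O1 a) = Rop O2 (g a)) /\
  (forall h a, g (Kact O1 h a) = Kact O2 (f h) (g a)).

Definition Rprime (O : RBData) : YDPHData :=
  {| Pc := Kc O; Pmul := Kmul O; Pone := Kone O; Pcop := Kcop O; Peps := Keps O;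
     PS := KS O; Pact := fun a b => Kact O (Rop O a) b |}.

(* the (unique) convolution inverse beta of alpha_->, chosen by choice *)
Definition beta_of (P : YDPHData) : Pc P -> Pc P -> Pc P :=
  epsilon (inhabits (fun _ y => y)) (conv_inv (Pcop P) (Peps P) (Pact P)).

Definition Lobj (P : YDPHData) : RBData :=
  {| Hc := Pc P; Hmul := bullet (Pmul P) (Pcop P) (Pact P); Hone := Pone P;
     Hcop := Pcop P; Heps := Peps P; HS := Sharp (Pcop P) (PS P) (@beta_of P);
     Kc := Pc P; Kmul := Pmul P; Kone := Pone P; Kcop := Pcop P; Keps := Peps P;
     KS := PS P; Kact := Pact P; Rop := fun x => x |}.

End YD.

Arguments Pc {k}. Arguments Pmul {k}. Arguments Pone {k}. Arguments Pcop {k}.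
Arguments Peps {k}. Arguments PS {k}. Arguments Pact {k}.
Arguments Hc {k}. Arguments Hmul {k}. Arguments Hone {k}. Arguments Hcop {k}.
Arguments Heps {k}. Arguments HS {k}. Arguments Kc {k}. Arguments Kmul {k}.
Arguments Kone {k}. Arguments Kcop {k}. Arguments Keps {k}. Arguments KS {k}.
Arguments Kact {k}. Arguments Rop {k}.
Arguments Cmor {k} O1 O2 f g. Arguments YDPH_hom {k} P Q g.
Arguments in_Cprime {k} O. Arguments is_YDPH {k} P.
Arguments Rprime {k} O. Arguments Lobj {k} P.

(* Main.v *)
Require Import Defs.
From HB Require Import structures.
From mathcomp Require Import all_boot all_algebra.
From mathcomp Require Import boolp classical_sets.
Set Implicit Arguments. Unset Strict Implicit. Unset Printing Implicit Defensive.
Import GRing.Theory.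
Local Open Scope ring_scope.


Section Lin.
Variable k : fieldType.

Lemma linD (V W : lmodType k) (f : V -> W) : lin f -> forall x y, f (x + y) = f x + f y.
Proof. by move=> hf x y; rewrite -[x in f (x + _)]scale1r hf scale1r. Qed.
Lemma lin0 (V W : lmodType k) (f : V -> W) : lin f -> f 0 = 0.
Proof. move=> hf; have h := linD hf 0 0; rewrite addr0 in h.
by apply: (@addrI _ (f 0)); rewrite -h addr0. Qed.
Lemma linZ (V W : lmodType k) (f : V -> W) : lin f -> forall a x, f (a *: x) = a *: f x.
Proof. by move=> hf a x; rewrite -[a *: x]addr0 hf lin0 // addr0. Qed.
Lemma linS (V W : lmodType k) (f : V -> W) : lin f ->
  forall (T : Type) (s : seq T) (F : T -> V), f (\sum_(i <- s) F i) = \sum_(i <- s) f (F i).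
Proof. move=> hf T s F; elim: s => [|a s IH]; first by rewrite !big_nil lin0.
by rewrite !big_cons linD // IH. Qed.

Definition sw (V : lmodType k) (W : nmodType) (c : V -> seq (V * V)) (x : V) (F : V -> V -> W) : W :=
  \sum_(p <- c x) F p.1 p.2.

Lemma lin_idf (V : lmodType k) : lin (fun x : V => x).
Proof. by []. Qed.
Lemma lin_comp1 (U V W : lmodType k) (f : V -> W) (g : U -> V) :
  lin f -> lin g -> lin (fun x => f (g x)).
Proof. by move=> hf hg a x y; rewrite hg hf. Qed.
Lemma lin_sumf (U W : lmodType k) (T : Type) (s : seq T) (G : T -> U -> W) :
  (forall p, lin (G p)) -> lin (fun x => \sum_(p <- s) G p x).
Proof. move=> hG a x y; elim: s => [|p s IH]; first by rewrite !big_nil scaler0 addr0.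
by rewrite !big_cons hG IH scalerDr addrACA. Qed.
Lemma lin_swF (U V W : lmodType k) (c : V -> seq (V * V)) (x : V) (F : U -> V -> V -> W) :
  (forall a b, lin (fun y => F y a b)) -> lin (fun y => sw c x (F y)).
Proof. by move=> hF; rewrite /sw; apply: lin_sumf => p; apply: hF. Qed.
Lemma lin_scalel (U W : lmodType k) (c : k) (g : U -> W) : lin g -> lin (fun x => c *: g x).
Proof. by move=> hg a x y; rewrite hg scalerDr !scalerA mulrC. Qed.
Lemma lin_scaler (U W : lmodType k) (g : U -> k^o) (v : W) : lin g -> lin (fun x => g x *: v).
Proof. by move=> hg a x y; rewrite hg scalerDl scalerA. Qed.
Lemma lin_bil1 (U V1 V2 W : lmodType k) (b : V1 -> V2 -> W) (g : U -> V1) (c : V2) :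
  bilin b -> lin g -> lin (fun x => b (g x) c).
Proof. by move=> [_ hb] hg; apply: (lin_comp1 (f := fun y => b y c)). Qed.
Lemma lin_bil2 (U V1 V2 W : lmodType k) (b : V1 -> V2 -> W) (g : U -> V2) (c : V1) :
  bilin b -> lin g -> lin (fun x => b c (g x)).
Proof. by move=> [hb _] hg; apply: (lin_comp1 (f := b c)). Qed.
Lemma lin_tri1 (U V1 V2 V3 W : lmodType k) (b : V1 -> V2 -> V3 -> W) (g : U -> V1) c d :
  trilin b -> lin g -> lin (fun x => b (g x) c d).
Proof. by move=> [_ [_ hb]] hg; apply: (lin_comp1 (f := fun y => b y c d)). Qed.
Lemma lin_tri2 (U V1 V2 V3 W : lmodType k) (b : V1 -> V2 -> V3 -> W) (g : U -> V2) c d :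
  trilin b -> lin g -> lin (fun x => b c (g x) d).
Proof. by move=> [_ [hb _]] hg; apply: (lin_comp1 (f := fun y => b c y d)). Qed.
Lemma lin_tri3 (U V1 V2 V3 W : lmodType k) (b : V1 -> V2 -> V3 -> W) (g : U -> V3) c d :
  trilin b -> lin g -> lin (fun x => b c d (g x)).
Proof. by move=> [hb _] hg; apply: (lin_comp1 (f := b c d)). Qed.

Lemma sum_tscale (V W U : lmodType k) (b : V -> W -> U) a (s : seq (V * W)) :
  (forall y, lin (fun x => b x y)) ->
  \sum_(p <- tscale a s) b p.1 p.2 = a *: \sum_(p <- s) b p.1 p.2.
Proof. move=> hb; rewrite /tscale big_map scaler_sumr; apply: eq_bigr => p _ /=.
by rewrite (linZ (hb _)). Qed.

Lemma lin_sw (U V W : lmodType k) (c : V -> seq (V * V)) (g : U -> V) (F : V -> V -> W) :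
  tlin c -> bilin F -> lin g -> lin (fun x => sw c (g x) F).
Proof. move=> hc hF hg a x y; rewrite /sw hg hc // big_cat /= sum_tscale //; by case: hF. Qed.

Definition quadlin (V1 V2 V3 V4 U : lmodType k) (F : V1 -> V2 -> V3 -> V4 -> U) :=
  (forall a b c, lin (F a b c)) /\ (forall a b d, lin (fun c => F a b c d)) /\
  (forall a c d, lin (fun b => F a b c d)) /\ (forall b c d, lin (fun a => F a b c d)).
Lemma lin_q1 (U V1 V2 V3 V4 W : lmodType k) (b : V1 -> V2 -> V3 -> V4 -> W) (g : U -> V1) c d e :
  quadlin b -> lin g -> lin (fun x => b (g x) c d e).
Proof. by move=> [_ [_ [_ hb]]] hg; apply: (lin_comp1 (f := fun y => b y c d e)). Qed.
Lemma lin_q2 (U V1 V2 V3 V4 W : lmodType k) (b : V1 -> V2 -> V3 -> V4 -> W) (g : U -> V2) c d e :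
  quadlin b -> lin g -> lin (fun x => b c (g x) d e).
Proof. by move=> [_ [_ [hb _]]] hg; apply: (lin_comp1 (f := fun y => b c y d e)). Qed.
Lemma lin_q3 (U V1 V2 V3 V4 W : lmodType k) (b : V1 -> V2 -> V3 -> V4 -> W) (g : U -> V3) c d e :
  quadlin b -> lin g -> lin (fun x => b c d (g x) e).
Proof. by move=> [_ [hb _]] hg; apply: (lin_comp1 (f := fun y => b c d y e)). Qed.
Lemma lin_q4 (U V1 V2 V3 V4 W : lmodType k) (b : V1 -> V2 -> V3 -> V4 -> W) (g : U -> V4) c d e :
  quadlin b -> lin g -> lin (fun x => b c d e (g x)).
Proof. by move=> [hb _] hg; apply: (lin_comp1 (f := b c d e)). Qed.
Lemma sw_pull (V W1 W2 : lmodType k) (G : W1 -> W2) (c : V -> seq (V * V)) x (F : V -> V -> W1) :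
  lin G -> G (sw c x F) = sw c x (fun a b => G (F a b)).
Proof. by move=> hG; rewrite /sw (linS hG). Qed.
Lemma sw_exch (V1 V2 : lmodType k) (W : nmodType) (c1 : V1 -> seq (V1 * V1)) (c2 : V2 -> seq (V2 * V2)) x y
  (F : V1 -> V1 -> V2 -> V2 -> W) :
  sw c1 x (fun a b => sw c2 y (fun u v => F a b u v)) = sw c2 y (fun u v => sw c1 x (fun a b => F a b u v)).
Proof. by rewrite /sw exchange_big. Qed.
Lemma sw_scal (V W : lmodType k) (c : V -> seq (V * V)) (F : V -> V -> W) a x :
  tlin c -> bilin F -> sw c (a *: x) F = a *: sw c x F.
Proof. move=> hc hF; have h := @lin_sw V V W c (fun x => x) F hc hF (@lin_idf V).
by rewrite (linZ h). Qed.
End Lin.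

Ltac lin_tac := cbv beta;
  solve [ apply: lin_idf
  | match goal with
    | |- lin (fun x => \sum_(p <- _) _) => apply: lin_sumf => ?; lin_tac
    | H : tlin ?c |- lin (fun x => sw ?c (@?g x) ?F) =>
        apply: (@lin_sw _ _ _ _ c g F H); [multi_tac | lin_tac]
    | |- lin (fun y => sw ?c ?x (@?F y)) => apply: lin_swF => ? ?; lin_tac
    | |- lin (fun x => ?c *: (@?g x)) => apply: (@lin_scalel _ _ _ c g); lin_tac
    | |- lin (fun x => (@?g x) *: ?v) => apply: (@lin_scaler _ _ _ g v); lin_tac
    | H : bilin ?b |- lin (fun x => ?b (@?g x) ?c) => apply: (@lin_bil1 _ _ _ _ _ b g c H); lin_tac
    | H : bilin ?b |- lin (fun x => ?b ?c (@?g x)) => apply: (@lin_bil2 _ _ _ _ _ b g c H); lin_tac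
    | H : trilin ?b |- lin (fun x => ?b (@?g x) ?c ?d) => apply: (@lin_tri1 _ _ _ _ _ _ b g c d H); lin_tac
    | H : trilin ?b |- lin (fun x => ?b ?c (@?g x) ?d) => apply: (@lin_tri2 _ _ _ _ _ _ b g c d H); lin_tac
    | H : trilin ?b |- lin (fun x => ?b ?c ?d (@?g x)) => apply: (@lin_tri3 _ _ _ _ _ _ b g c d H); lin_tac
    | H : quadlin ?b |- lin (fun x => ?b (@?g x) ?c ?d ?e) => apply: (@lin_q1 _ _ _ _ _ _ _ b g c d e H); lin_tac
    | H : quadlin ?b |- lin (fun x => ?b ?c (@?g x) ?d ?e) => apply: (@lin_q2 _ _ _ _ _ _ _ b g c d e H); lin_tac
    | H : quadlin ?b |- lin (fun x => ?b ?c ?d (@?g x) ?e) => apply: (@lin_q3 _ _ _ _ _ _ _ b g c d e H); lin_tac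
    | H : quadlin ?b |- lin (fun x => ?b ?c ?d ?e (@?g x)) => apply: (@lin_q4 _ _ _ _ _ _ _ b g c d e H); lin_tac
    | H : lin ?f |- lin (fun x => ?f (@?g x)) => apply: (@lin_comp1 _ _ _ _ f g H); lin_tac
    | H : lin ?f |- lin ?f => exact: H
    | |- lin ?f => lazymatch f with (fun _ => _) => fail | _ =>
         change (lin (fun z => f z)); lin_tac end
    end ]
with multi_tac :=
  repeat split; intros; lin_tac.

Section Coalg.
Variable k : fieldType.
Variable V : lmodType k.
Variable c : V -> seq (V * V).
Variable e : V -> k.
Hypothesis hc : is_coalg c e.

Lemma c_lin : tlin c. Proof. by case: hc => _ []. Qed.
Lemma e_lin : lin (e : V -> k^o). Proof. by case: hc. Qed.

Lemma swL (W : lmodType k) (G : V -> W) x : lin G -> sw c x (fun a b => e a *: G b) = G x.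
Proof. move=> hG; case: hc => _ [_ [_ /(_ x) [h _]]].
by rewrite -{2}h (linS hG) /sw; apply: eq_bigr => p _; rewrite (linZ hG). Qed.
Lemma swR (W : lmodType k) (G : V -> W) x : lin G -> sw c x (fun a b => e b *: G a) = G x.
Proof. move=> hG; case: hc => _ [_ [_ /(_ x) [_ h]]].
by rewrite -{2}h (linS hG) /sw; apply: eq_bigr => p _; rewrite (linZ hG). Qed.

Lemma coassoc (W : lmodType k) (F : V -> V -> V -> W) x : trilin F ->
  sw c x (fun a b => sw c a (fun a1 a2 => F a1 a2 b)) =
  sw c x (fun a b => sw c b (fun b1 b2 => F a b1 b2)).
Proof. move=> hF; case: hc => _ [_ [/(_ x) h _]]; have := h W F hF.
rewrite /sw3 /sw3r !big_flatten /= !big_map /sw.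
under eq_bigr do rewrite big_map. move=> ->.
by apply: eq_bigr => p _; rewrite big_map. Qed.

Lemma eq_sw (W : nmodType) x (F G : V -> V -> W) : (forall a b, F a b = G a b) -> sw c x F = sw c x G.
Proof. by move=> h; apply: eq_bigr. Qed.

Definition sw3' (W : nmodType) x (F : V -> V -> V -> W) := sw c x (fun a b => sw c a (fun a1 a2 => F a1 a2 b)).
Definition sw4' (W : nmodType) x (F : V -> V -> V -> V -> W) := sw3' x (fun a b d => sw c a (fun a1 a2 => F a1 a2 b d)).

Lemma sw3r (W : lmodType k) (F : V -> V -> V -> W) x : trilin F ->
  sw c x (fun a b => sw c b (fun b1 b2 => F a b1 b2)) = sw3' x F.
Proof. by move=> hF; rewrite /sw3' coassoc. Qed.

Lemma sw4_2 (W : lmodType k) (F : V -> V -> V -> V -> W) x : quadlin F ->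
  sw3' x (fun a b d => sw c b (fun b1 b2 => F a b1 b2 d)) = sw4' x F.
Proof. move=> hF; have cl := c_lin; rewrite /sw4' /sw3'; apply: eq_sw => t d.
by rewrite -coassoc //; multi_tac. Qed.

Lemma sw4_3 (W : lmodType k) (F : V -> V -> V -> V -> W) x : quadlin F ->
  sw3' x (fun a b d => sw c d (fun d1 d2 => F a b d1 d2)) = sw4' x F.
Proof. move=> hF; have cl := c_lin.
rewrite -sw3r; last by multi_tac.
transitivity (sw c x (fun a t => sw c t (fun t' d2 => sw c t' (fun b d1 => F a b d1 d2)))).
  by apply: eq_sw => a t; rewrite -coassoc //; multi_tac.
rewrite sw3r; last by multi_tac.
rewrite /sw4' /sw3'; apply: eq_sw => t d2; rewrite coassoc //; multi_tac. Qed.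

Lemma sw4_1r (W : lmodType k) (F : V -> V -> V -> V -> W) x : quadlin F ->
  sw c x (fun a t => sw3' t (fun b c d => F a b c d)) = sw4' x F.
Proof. move=> hF; have cl := c_lin; rewrite /sw3'.
rewrite sw3r; last by multi_tac.
rewrite /sw4' /sw3'; apply: eq_sw => s d; rewrite sw3r //; multi_tac. Qed.

Lemma sum_sw3 (W : nmodType) x (G : V * V * V -> W) :
  \sum_(p <- sw3 c x) G p = sw3' x (fun a b d => G (a, b, d)).
Proof. rewrite /sw3 big_flatten big_map /sw3' /sw; apply: eq_bigr => p _.
by rewrite big_map. Qed.
Lemma sum_sw4 (W : nmodType) x (G : V * V * V * V -> W) :
  \sum_(p <- sw4 c x) G p = sw4' x (fun a b d e => G (a, b, d, e)).
Proof. rewrite /sw4 big_flatten big_map sum_sw3 /sw4' /sw3' /sw; apply: eq_bigr => p _.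
apply: eq_bigr => q _; by rewrite big_map. Qed.
Lemma sum_ap_sw3 (W : nmodType) (J : Type) x y (f : V * V * V -> V * V * V -> J) (G : J -> W) :
  \sum_(i <- [seq f p q | p <- sw3 c x, q <- sw3 c y]) G i =
  sw3' x (fun a1 a2 a3 => sw3' y (fun b1 b2 b3 => G (f (a1, a2, a3) (b1, b2, b3)))).
Proof. rewrite big_allpairs_dep sum_sw3 /sw3' /sw; apply: eq_bigr => p _; apply: eq_bigr => q _.
by rewrite sum_sw3. Qed.
End Coalg.



Section Linv.
Local Open Scope classical_set_scope.
Variable k : fieldType.
Variables V W : lmodType k.
Variable f : V -> W.
Hypothesis fl : lin f.
Hypothesis finj : injective f.

Definition G0 : set (W * V) := fun p => p.1 = f p.2.
Definition Pgr (G : set (W * V)) : Prop :=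
  (forall a w v w' v', G (w, v) -> G (w', v') -> G (a *: w + w', a *: v + v')) /\
  (forall v, G (0, v) -> v = 0).
Definition P' (X : set (W * V)) := Pgr (G0 `|` X).

Lemma G0_P : Pgr G0.
Proof. split.
- by move=> a w v w' v'; rewrite /G0 /= => -> ->; rewrite fl.
- by move=> v; rewrite /G0 /= => h; apply: finj; rewrite -h (lin0 fl).
Qed.

Lemma chain_ok (F : set (set (W * V))) : F `<=` P' -> total_on F subset ->
  P' (\bigcup_(X in F) X).
Proof.
move=> FP Ftot; split.
- move=> a w v w' v' h1 h2.
  case: h1 => [h1|[X FX h1]]; case: h2 => [h2|[Y FY h2]].
  + by left; case: G0_P => h _; apply: h.
  + have [hY _] := FP Y FY; case: (hY a w v w' v' (or_introl h1) (or_intror h2)) => h.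
      by left. by right; exists Y.
  + have [hX _] := FP X FX; case: (hX a w v w' v' (or_intror h1) (or_introl h2)) => h.
      by left. by right; exists X.
  + case: (Ftot X Y FX FY) => XY.
    * have [hY _] := FP Y FY; case: (hY a w v w' v' (or_intror (XY _ h1)) (or_intror h2)) => h.
        by left. by right; exists Y.
    * have [hX _] := FP X FX; case: (hX a w v w' v' (or_intror h1) (or_intror (XY _ h2))) => h.
        by left. by right; exists X.
- move=> v [h|[X FX h]]; first by case: G0_P => _; apply.
  by have [_ hX] := FP X FX; apply: hX; right.
Qed.

Lemma linv_exists : exists g : W -> V, lin g /\ forall x, g (f x) = x.
Proof.
have [X [PX Xmax]] := Zorn_bigcup chain_ok.
set G := G0 `|` X.
have G00 : G (0, 0) by left; rewrite /G0 /= (lin0 fl).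
have Gcl := PX.1.
have Gz := PX.2.
have Gtot : forall w, exists v, G (w, v).
  move=> w; apply/not_existsP => hw.
  pose G' : set (W * V) := fun p => exists c g, p.1 = g + c *: w /\ G (g, p.2).
  have G0G' : forall p, (G0 `|` G') p -> G' p.
    move=> [w1 v1] [h|//]; exists 0, w1; rewrite scale0r addr0; split=> //; by left.
  have PG' : P' G'.
    split.
    - move=> a w1 v1 w2 v2 /G0G' [c1 [g1 [/= e1 h1]]] /G0G' [c2 [g2 [/= e2 h2]]].
      right; exists (a * c1 + c2), (a *: g1 + g2); split.
        by rewrite /= e1 e2 scalerDr scalerDl scalerA addrACA.
      by apply: Gcl.
    - move=> v /G0G' [c [g [/= e h]]].
      have [c0|cn0] := eqVneq c 0.
        by move: e; rewrite c0 scale0r addr0 => e; apply: Gz; rewrite e.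
      exfalso; apply: (hw (- c^-1 *: v)).
      have -> : w = - c^-1 *: g + 0.
        rewrite addr0; apply: (@scalerI _ _ c); first done.
        rewrite scalerA mulrN mulfV // scaleN1r.
        by apply/eqP; rewrite -addr_eq0 addrC -e.
      by rewrite -[_ *: v]addr0; apply: Gcl.
  have XG' : X `<` G'.
    split; first by move=> [w1 v1] Xp; exists 0, w1; rewrite scale0r addr0; split=> //; right.
    move=> G'X; apply: (hw 0); right; apply: G'X; exists 1, 0; split; last by [].
    by rewrite /= add0r scale1r.
  exact: (Xmax _ XG' PG').
pose gg w := xget 0 [set v | G (w, v)].
have gG : forall w, G (w, gg w).
  by move=> w; rewrite /gg; case: xgetP => // hn; have [v hv] := Gtot w; exfalso; apply: (hn v).
have uniq : forall w v v', G (w, v) -> G (w, v') -> v = v'.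
  move=> w v v' h h'; have := Gcl (-1) _ _ _ _ h h'.
  rewrite scaleN1r addNr => /Gz/eqP; rewrite scaleN1r addrC subr_eq0 => /eqP -> //.
exists gg; split.
- move=> a x y; apply: (uniq (a *: x + y)); first exact: gG.
  by apply: Gcl; apply: gG.
- by move=> x; apply: (uniq (f x)); [apply: gG | left].
Qed.
End Linv.



Section Main.
Variable k : fieldType.
Variable O : RBData k.
Hypothesis hO : in_Cprime O.

Local Notation H := (Hc O). Local Notation K := (Kc O).
Local Notation mH := (Hmul O). Local Notation oneH := (Hone O).
Local Notation cH := (Hcop O). Local Notation eH := (Heps O). Local Notation SH := (HS O).
Local Notation mK := (Kmul O). Local Notation oneK := (Kone O).
Local Notation cK := (Kcop O). Local Notation eK := (Keps O). Local Notation SK := (KS O).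
Local Notation act := (Kact O). Local Notation R := (Rop O).

Lemma hH : is_hopf mH oneH cH eH SH. Proof. by case: hO. Qed.
Lemma hY : is_YDHopf_monoid mH oneH cH eH SH act (@Kcoact _ O) mK oneK cK eK SK.
Proof. by case: hO => _ []. Qed.
Lemma hR : coalg_hom cK eK cH eH R. Proof. by case: hO => _ [_ []]. Qed.
Lemma Rinj : injective R. Proof. by case: hO => _ [_ [_ []]]. Qed.
Lemma rb1 : RB1 O. Proof. by case: hO => _ [_ [_ [_ []]]]. Qed.
Lemma rb2 : RB2 O. Proof. by case: hO => _ [_ [_ [_ []]]]. Qed.

Lemma mHb : bilin mH. Proof. by case: hH => [[]]. Qed.
Lemma mHA x y z : mH x (mH y z) = mH (mH x y) z. Proof. by case: hH => [[_ []]]. Qed.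
Lemma mH1l x : mH oneH x = x. Proof. by case: hH => [[_ [_ h]]] _; case: (h x). Qed.
Lemma mH1r x : mH x oneH = x. Proof. by case: hH => [[_ [_ h]]] _; case: (h x). Qed.
Lemma cHco : is_coalg cH eH. Proof. by case: hH => _ []. Qed.
Lemma cHl : tlin cH. Proof. exact: c_lin cHco. Qed.
Lemma eHl : lin (eH : H -> k^o). Proof. exact: e_lin cHco. Qed.
Lemma eHM a b : eH (mH a b) = eH a * eH b. Proof. by case: hH => _ [_ [[h _] _]]. Qed.
Lemma eH1 : eH oneH = 1. Proof. by case: hH => _ [_ [[_ [h _]] _]]. Qed.
Lemma cH1 : teq2 (cH oneH) [:: (oneH, oneH)]. Proof. by case: hH => _ [_ [[_ [_ h]] _]]. Qed.
Lemma cHM x y : teq2 (cH (mH x y)) [seq (mH p.1 q.1, mH p.2 q.2) | p <- cH x, q <- cH y].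
Proof. by case: hH => _ [_ [_ [h _]]]. Qed.
Lemma SHl : lin SH. Proof. by case: hH => _ [_ [_ [_ [h _]]]]. Qed.
Lemma SHr x : sw cH x (fun a b => mH a (SH b)) = eH x *: oneH.
Proof. by case: hH => _ [_ [_ [_ [_ h]]]]; case: (h x). Qed.
Lemma SHlft x : sw cH x (fun a b => mH (SH a) b) = eH x *: oneH.
Proof. by case: hH => _ [_ [_ [_ [_ h]]]]; case: (h x). Qed.

Lemma actb : bilin act. Proof. by case: hY => [[]]. Qed.
Lemma act1 v : act oneH v = v. Proof. by case: hY => [[_ []]]. Qed.
Lemma actM a b v : act (mH a b) v = act a (act b v). Proof. by case: hY => [[_ [_ []]]]. Qed.
Lemma mKb : bilin mK. Proof. by case: hY => _ [[]]. Qed.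
Lemma mKA x y z : mK x (mK y z) = mK (mK x y) z. Proof. by case: hY => _ [[_ []]]. Qed.
Lemma mK1l x : mK oneK x = x. Proof. by case: hY => _ [[_ [_ h]]] _; case: (h x). Qed.
Lemma mK1r x : mK x oneK = x. Proof. by case: hY => _ [[_ [_ h]]] _; case: (h x). Qed.
Lemma cKco : is_coalg cK eK. Proof. by case: hY => _ [_ []]. Qed.
Lemma cKl : tlin cK. Proof. exact: c_lin cKco. Qed.
Lemma eKl : lin (eK : K -> k^o). Proof. exact: e_lin cKco. Qed.
Lemma act_mK h a b : act h (mK a b) = sw cH h (fun h1 h2 => mK (act h1 a) (act h2 b)).
Proof. by case: hY => _ [_ [_ [h' _]]]; rewrite h'. Qed.
Lemma act_oneK h : act h oneK = eH h *: oneK.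
Proof. by case: hY => _ [_ [_ [_ [_ [h' _]]]]]. Qed.
Lemma cK_act h a : teq2 (cK (act h a)) [seq (act p.1 q.1, act p.2 q.2) | p <- cH h, q <- cK a].
Proof. by case: hY => _ [_ [_ [_ [_ [_ [_ [h' _]]]]]]]. Qed.
Lemma eK_act h a : eK (act h a) = eH h * eK a.
Proof. by case: hY => _ [_ [_ [_ [_ [_ [_ [_ [_ [h' _]]]]]]]]]. Qed.
Lemma eKM a b : eK (mK a b) = eK a * eK b.
Proof. by case: hY => _ [_ [_ [_ [_ [_ [_ [_ [_ [_ [_ [[h' _] _]]]]]]]]]]]. Qed.
Lemma eK1 : eK oneK = 1.
Proof. by case: hY => _ [_ [_ [_ [_ [_ [_ [_ [_ [_ [_ [[_ [h' _]] _]]]]]]]]]]]. Qed.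
Lemma cK1 : teq2 (cK oneK) [:: (oneK, oneK)].
Proof. by case: hY => _ [_ [_ [_ [_ [_ [_ [_ [_ [_ [_ [[_ [_ h']] _]]]]]]]]]]]. Qed.
Lemma cKM a b : teq2 (cK (mK a b))
     (flatten [seq [seq (mK p.1 (act r.1 q.1), mK r.2 q.2)
                      | r <- @Kcoact _ O p.2, q <- cK b] | p <- cK a]).
Proof. by case: hY => _ [_ [_ [_ [_ [_ [_ [_ [_ [_ [_ [_ [h' _]]]]]]]]]]]]. Qed.
Lemma SKl : lin SK.
Proof. by case: hY => _ [_ [_ [_ [_ [_ [_ [_ [_ [_ [_ [_ [_ [[h' _] _]]]]]]]]]]]]]. Qed.
Lemma SKr x : sw cK x (fun a b => mK a (SK b)) = eK x *: oneK.
Proof. by case: hY => _ [_ [_ [_ [_ [_ [_ [_ [_ [_ [_ [_ [_ [[_ h'] _]]]]]]]]]]]]]; case: (h' x). Qed.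

Lemma Rl : lin R. Proof. by case: hR. Qed.
Lemma cHR x : teq2 (cH (R x)) [seq (R p.1, R p.2) | p <- cK x]. Proof. by case: hR => _ []. Qed.
Lemma eHR x : eH (R x) = eK x. Proof. by case: hR => _ []. Qed.


Lemma swHR (W : lmodType k) (F : H -> H -> W) x : bilin F ->
  sw cH (R x) F = sw cK x (fun a b => F (R a) (R b)).
Proof. by move=> hF; rewrite /sw (cHR x hF) big_map. Qed.

Lemma swKact (W : lmodType k) (B : K -> K -> W) h a : bilin B ->
  sw cK (act h a) B = sw cH h (fun h1 h2 => sw cK a (fun a1 a2 => B (act h1 a1) (act h2 a2))).
Proof. by move=> hB; rewrite /sw (cK_act h a hB) big_allpairs_dep. Qed.

Lemma swK1 (W : lmodType k) (B : K -> K -> W) : bilin B -> sw cK oneK B = B oneK oneK.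
Proof. by move=> hB; rewrite /sw (cK1 hB) big_seq1. Qed.
Lemma swH1 (W : lmodType k) (B : H -> H -> W) : bilin B -> sw cH oneH B = B oneH oneH.
Proof. by move=> hB; rewrite /sw (cH1 hB) big_seq1. Qed.

Ltac ctx := have ? := mHb; have ? := actb; have ? := mKb; have ? := cHl; have ? := cKl;
  have ? := eHl; have ? := eKl; have ? := SHl; have ? := SKl; have ? := Rl.

Lemma RB1s a b : mH (R a) (R b) = R (sw cK a (fun a1 a2 => mK a1 (act (R a2) b))).
Proof. exact: rb1. Qed.

Lemma R1 : R oneK = oneH.
Proof. ctx.
have g1 : mH (R oneK) (R oneK) = R oneK.
  rewrite RB1s; congr R; rewrite (swK1 (B := fun a b => mK a (act (R b) oneK))); last by multi_tac.
  by rewrite mK1l act_oneK eHR eK1 scale1r.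
have s1 : mH (SH (R oneK)) (R oneK) = oneH.
  have := SHlft (R oneK); rewrite swHR; last by multi_tac.
  by rewrite swK1 ?eHR ?eK1 ?scale1r //; multi_tac.
by rewrite -[LHS]mH1l -s1 -mHA g1.
Qed.


Definition act' (x : K) (y : K) := act (R x) y.
Definition bt (x y : K) := act (SH (R x)) y.

Lemma P_coalg_hom2 : coalg_hom2 cK eK act'.
Proof. ctx. split; first by rewrite /act'; multi_tac.
split.
- move=> x y U B hB; rewrite big_allpairs_dep /act'.
  change (sw cK (act (R x) y) B = sw cK x (fun a b => sw cK y (fun c d => B (act (R a) c) (act (R b) d)))).
  rewrite swKact // swHR //; multi_tac.
- by move=> x y; rewrite /act' eK_act eHR.
Qed.

Lemma P_1 x y z : act' x (mK y z) = \sum_(p <- cK x) mK (act' p.1 y) (act' p.2 z).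
Proof. ctx. rewrite /act' act_mK swHR //; multi_tac. Qed.

Lemma P_2 x y z : act' x (act' y z) = act' (bullet mK cK act' x y) z.
Proof. by rewrite /act' -actM RB1s. Qed.

Lemma P_beta : conv_inv cK eK act' bt.
Proof. ctx. rewrite /act' /bt; split; first by multi_tac.
move=> x y; split.
- change (sw cK x (fun a b => act (R a) (act (SH (R b)) y)) = eK x *: y).
  transitivity (sw cH (R x) (fun a b => act (mH a (SH b)) y)).
    rewrite swHR; last by multi_tac.
    by apply: eq_sw => a b; rewrite actM.
  rewrite -(sw_pull (G := fun h => act h y)); last by lin_tac.
  by rewrite SHr eHR; case: actb => _ h; rewrite (linZ (h y)) act1.
- change (sw cK x (fun a b => act (SH (R a)) (act (R b) y)) = eK x *: y).
  transitivity (sw cH (R x) (fun a b => act (mH (SH a) b) y)).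
    rewrite swHR; last by multi_tac.
    by apply: eq_sw => a b; rewrite actM.
  rewrite -(sw_pull (G := fun h => act h y)); last by lin_tac.
  by rewrite SHlft eHR; case: actb => _ h; rewrite (linZ (h y)) act1.
Qed.


Lemma P_5 x y : teq2 (cK (mK x y))
   [seq (mK p.1.1.1 (act' p.1.1.2 (bt p.2 q.1)), mK p.1.2 q.2) | p <- sw4 cK x, q <- cK y].
Proof. ctx. move=> U B hB.
rewrite (cKM x y hB) big_flatten big_map big_allpairs_dep sum_sw4 /=.
set G := fun a b c d => sw cK y (fun y1 y2 => B (mK a (act (mH (R b) (SH (R d))) y1)) (mK c y2)).
transitivity (sw cK x (fun a t => sw3' cK t (fun b c d => G a b c d))).
  rewrite /sw; apply: eq_bigr => p _; rewrite big_allpairs_dep /Kcoact big_map sum_sw3.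
  by rewrite /G /sw3' /sw /=.
rewrite (sw4_1r cKco); last by rewrite /G; multi_tac.
rewrite /sw4' /sw3' /G /act' /bt; apply: eq_sw => t d; apply: eq_sw => s c; apply: eq_sw => a b.
by apply: eq_bigr => q _; rewrite actM.
Qed.


Lemma swHM (W : lmodType k) (C : H -> H -> W) x y : bilin C ->
  sw cH (mH x y) C = sw cH x (fun u v => sw cH y (fun w z => C (mH u w) (mH v z))).
Proof. by move=> hC; rewrite /sw (cHM x y hC) big_allpairs_dep. Qed.

Lemma SH_anti (W : lmodType k) (B : H -> H -> W) h : bilin B ->
  sw cH (SH h) B = sw cH h (fun a b => B (SH b) (SH a)).
Proof. ctx. move=> hB.
set F := fun a b c d => sw cH (SH a) (fun u v => sw cH b (fun w z =>
            B (mH (mH u w) (SH d)) (mH (mH v z) (SH c)))).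
have hF : quadlin F by rewrite /F; multi_tac.
have eq1 : sw4' cH h F = sw cH h (fun a b => B (SH b) (SH a)).
  rewrite /sw4'.
  transitivity (sw3' cH h (fun t c d => eH t *: B (SH d) (SH c))).
    rewrite /sw3'; apply: eq_sw => s d; apply: eq_sw => t c; rewrite /F.
    transitivity (sw cH t (fun a b => sw cH (mH (SH a) b)
        (fun u' v' => B (mH u' (SH d)) (mH v' (SH c))))).
      by apply: eq_sw => a b; rewrite swHM //; multi_tac.
    rewrite -(sw_pull (G := fun y => sw cH y (fun u' v' => B (mH u' (SH d)) (mH v' (SH c))))); last by lin_tac.
    by rewrite SHlft sw_scal ?swH1 ?mH1l //; multi_tac.
  rewrite /sw3'; apply: eq_sw => s d; rewrite (swL cHco (G := fun t => B (SH d) (SH t))) //; lin_tac.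
have eq2 : sw4' cH h F = sw cH (SH h) B.
  rewrite -(sw4_1r cHco) //.
  transitivity (sw cH h (fun a t => eH t *: sw cH (SH a) B)); last first.
    by rewrite (swR cHco (G := fun a => sw cH (SH a) B)) //; lin_tac.
  apply: eq_sw => a t; rewrite /F.
  transitivity (sw cH (SH a) (fun u v => sw3' cH t (fun b c d => sw cH b (fun w z =>
            B (mH (mH u w) (SH d)) (mH (mH v z) (SH c)))))).
    rewrite /sw3'; symmetry; rewrite [LHS]sw_exch; apply: eq_sw => u v.
    by rewrite [LHS]sw_exch.
  transitivity (sw cH (SH a) (fun u v => eH t *: B u v)); last first.
    by symmetry; apply: (sw_pull (G := fun y => eH t *: y)); lin_tac.
  apply: eq_sw => u v.
  rewrite -/(sw4' cH t _) -(sw4_2 cHco); last by multi_tac.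
  transitivity (sw3' cH t (fun w s d => eH s *: B (mH (mH u w) (SH d)) v)).
    rewrite /sw3'; apply: eq_sw => r d; apply: eq_sw => w s.
    transitivity (sw cH s (fun z c => B (mH (mH u w) (SH d)) (mH v (mH z (SH c))))).
      by apply: eq_sw => z c; rewrite mHA.
    rewrite -(sw_pull (G := fun y => B (mH (mH u w) (SH d)) (mH v y))); last by lin_tac.
    rewrite SHr; case: mHb => hm _; rewrite (linZ (hm v)) mH1r.
    by case: hB => hb _; rewrite (linZ (hb _)).
  rewrite /sw3'.
  transitivity (sw cH t (fun r d => B (mH u (mH r (SH d))) v)).
    apply: eq_sw => r d; rewrite (swR cHco (G := fun w => B (mH (mH u w) (SH d)) v)) ?mHA //; lin_tac.
  rewrite -(sw_pull (G := fun y => B (mH u y) v)); last by lin_tac.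
  rewrite SHr; case: mHb => hm _; rewrite (linZ (hm u)) mH1r.
  by case: hB => _ hb; rewrite (linZ (hb _)).
by rewrite -eq2 eq1.
Qed.


Definition bul (a b : K) := sw cK a (fun a1 a2 => mK a1 (act (R a2) b)).
Definition Shp (x : K) := sw cK x (fun a b => act (SH (R a)) (SK b)).

Lemma R_bul a b : R (bul a b) = mH (R a) (R b). Proof. by rewrite RB1s. Qed.

Lemma Shp_anti1 x : sw cK x (fun a b => bul a (Shp b)) = eK x *: oneK.
Proof. ctx.
set G := fun a1 a2 b1 b2 => mK a1 (act (mH (R a2) (SH (R b1))) (SK b2)).
have hG : quadlin G by rewrite /G; multi_tac.
transitivity (sw cK x (fun a b => sw cK a (fun a1 a2 => sw cK b (fun b1 b2 => G a1 a2 b1 b2)))).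
  apply: eq_sw => a b; rewrite /bul /Shp; apply: eq_sw => a1 a2.
  rewrite (sw_pull (G := fun y => act (R a2) y)); last by lin_tac.
  rewrite (sw_pull (G := fun y => mK a1 y)); last by lin_tac.
  by apply: eq_sw => b1 b2; rewrite /G actM.
rewrite -/(sw3' cK x (fun a1 a2 b => sw cK b (fun b1 b2 => G a1 a2 b1 b2))).
rewrite (sw4_3 cKco) // -(sw4_2 cKco) //.
transitivity (sw3' cK x (fun a s d => eK s *: mK a (SK d))).
  rewrite /sw3'; apply: eq_sw => t d; apply: eq_sw => a s; rewrite /G.
  rewrite -(sw_pull (G := fun h => mK a (act h (SK d)))); last by lin_tac.
  rewrite -(swHR (F := fun u v => mH u (SH v))); last by multi_tac.
  rewrite SHr eHR; case: actb => _ ha; rewrite (linZ (ha _)) act1.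
  by case: mKb => hm _; rewrite (linZ (hm _)).
rewrite /sw3'; rewrite -SKr; apply: eq_sw => t d.
by rewrite (swR cKco (G := fun a => mK a (SK d))) //; lin_tac.
Qed.

Lemma Shp_anti2 x : sw cK x (fun a b => mH (R a) (R (Shp b))) = eK x *: oneH.
Proof. ctx.
transitivity (R (sw cK x (fun a b => bul a (Shp b)))).
  rewrite (sw_pull (G := R)) //; apply: eq_sw => a b; by rewrite R_bul.
by rewrite Shp_anti1 (linZ Rl) R1.
Qed.

Lemma R_Shp x : R (Shp x) = SH (R x).
Proof. ctx.
symmetry; rewrite -(swR cKco (G := fun a => SH (R a))); last by lin_tac.
transitivity (sw cK x (fun a t => mH (SH (R a)) (sw cK t (fun b c => mH (R b) (R (Shp c)))))).
  apply: eq_sw => a t; rewrite Shp_anti2; case: mHb => hm _.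
  by rewrite (linZ (hm _)) mH1r.
transitivity (sw3' cK x (fun a b c => mH (SH (R a)) (mH (R b) (R (Shp c))))).
  rewrite -(sw3r cKco); last by rewrite /Shp; multi_tac.
  apply: eq_sw => a t; rewrite (sw_pull (G := fun y => mH (SH (R a)) y)) //; lin_tac.
rewrite /sw3'.
transitivity (sw cK x (fun t c => eK t *: R (Shp c))); last first.
  by rewrite (swL cKco (G := fun c => R (Shp c))) //; rewrite /Shp; lin_tac.
apply: eq_sw => t c.
transitivity (mH (sw cK t (fun a b => mH (SH (R a)) (R b))) (R (Shp c))).
  rewrite (sw_pull (G := fun y => mH y (R (Shp c)))); last by lin_tac.
  by apply: eq_sw => a b; rewrite mHA.
rewrite -(swHR (F := fun u v => mH (SH u) v)); last by multi_tac.
rewrite SHlft eHR; case: mHb => _ hm; by rewrite (linZ (hm _)) mH1l.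
Qed.

Lemma teq2_R (s t : seq (K * K)) :
  teq2 [seq (R p.1, R p.2) | p <- s] [seq (R p.1, R p.2) | p <- t] -> teq2 s t.
Proof. move=> h U B hB; have [L [Ll LR]] := linv_exists Rl Rinj.
have hB' : bilin (fun u v => B (L u) (L v)).
  by split=> ? ; lin_tac.
have := h U _ hB'; rewrite !big_map /=.
by under eq_bigr do rewrite !LR; under [in RHS]eq_bigr do rewrite !LR.
Qed.

Lemma P_6a x : teq2 (cK (Shp x)) [seq (Shp p.2, Shp p.1) | p <- cK x].
Proof. ctx. apply: teq2_R => U B hB; rewrite !big_map /=.
change (sw cK (Shp x) (fun a b => B (R a) (R b)) = sw cK x (fun a b => B (R (Shp b)) (R (Shp a)))).
rewrite -swHR // R_Shp SH_anti // swHR; last by multi_tac.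
by apply: eq_sw => a b; rewrite !R_Shp.
Qed.


Definition T4 (u1 v1 u2 v2 : K) := mH (mH (SH (R (act (R u1) v1))) (R u2)) (R v2).

Lemma RB2s (W : lmodType k) (D : H -> H -> W) x y : bilin D ->
  sw3' cK x (fun a1 a2 a3 => sw3' cK y (fun b1 b2 b3 => D (T4 a1 b1 a2 b2) (R (act (R a3) b3)))) =
  sw3' cK x (fun a1 a2 a3 => sw3' cK y (fun b1 b2 b3 => D (T4 a2 b2 a3 b3) (R (act (R a1) b1)))).
Proof. move=> hD; have := rb2 x y hD.
by rewrite !(@sum_ap_sw3 _ _ cK).
Qed.

Lemma R_lharp x y : R (lharp mK cK SK act' bt x y) =
  sw cK x (fun p1 p2 => sw cK y (fun q1 q2 => T4 p1 q1 p2 q2)).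
Proof. ctx. rewrite /lharp (linS Rl); apply: eq_bigr => p _; rewrite (linS Rl).
apply: eq_bigr => q _.
change (R (bul (bul (Shp (act' p.1 q.1)) p.2) q.2) = T4 p.1 q.1 p.2 q.2).
by rewrite !R_bul R_Shp.
Qed.

Lemma P_6b x y : teq2
       [seq (act' p.1 q.1, lharp mK cK SK act' bt p.2 q.2) | p <- cK x, q <- cK y]
       [seq (act' p.2 q.2, lharp mK cK SK act' bt p.1 q.1) | p <- cK x, q <- cK y].
Proof. ctx. apply: teq2_R => U B hB; rewrite !big_map !big_allpairs_dep /=.
change (sw cK x (fun p1 p2 => sw cK y (fun q1 q2 => B (R (act' p1 q1)) (R (lharp mK cK SK act' bt p2 q2)))) =
        sw cK x (fun p1 p2 => sw cK y (fun q1 q2 => B (R (act' p2 q2)) (R (lharp mK cK SK act' bt p1 q1))))).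
set D := fun h h' : H => B h' h.
have hD : bilin D by rewrite /D; case: hB => h1 h2; split.
have hT' : quadlin T4 by rewrite /T4; multi_tac.
transitivity (sw3' cK x (fun a1 a2 a3 => sw3' cK y (fun b1 b2 b3 => D (T4 a2 b2 a3 b3) (R (act (R a1) b1))))).
  rewrite -(sw3r cKco); last by rewrite /D /sw3'; multi_tac.
  apply: eq_sw => p1 p2.
  transitivity (sw cK y (fun q1 q2 => sw cK p2 (fun u1 u2 => sw cK q2 (fun v1 v2 =>
       B (R (act (R p1) q1)) (T4 u1 v1 u2 v2))))).
    apply: eq_sw => q1 q2; rewrite R_lharp.
    rewrite (sw_pull (G := fun h => B (R (act (R p1) q1)) h)); last by lin_tac.
    apply: eq_sw => u1 u2; rewrite (sw_pull (G := fun h => B (R (act (R p1) q1)) h)) //; lin_tac.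
  rewrite [LHS]sw_exch; apply: eq_sw => u1 u2.
  rewrite /D (sw3r cKco) //; multi_tac.
rewrite -RB2s //.
rewrite /sw3'.
symmetry; apply: eq_sw => p1 p2.
transitivity (sw cK y (fun q1 q2 => sw cK p1 (fun u1 u2 => sw cK q1 (fun v1 v2 =>
       B (R (act (R p2) q2)) (T4 u1 v1 u2 v2))))).
  apply: eq_sw => q1 q2; rewrite R_lharp.
  rewrite (sw_pull (G := fun h => B (R (act (R p2) q2)) h)); last by lin_tac.
  apply: eq_sw => u1 u2; rewrite (sw_pull (G := fun h => B (R (act (R p2) q2)) h)) //; lin_tac.
by rewrite [LHS]sw_exch.
Qed.


Lemma part1 : is_YDPH (Rprime O).
Proof.
rewrite /is_YDPH /Rprime /=.
have [_ [halg [hco [_ [_ [_ [_ [_ [_ [_ [_ [hcomp [_ [hant _]]]]]]]]]]]]]] := hY.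
split=> //; split=> //; split=> //.
split; first exact: P_coalg_hom2.
split; first exact: P_1.
split; first exact: P_2.
split=> //.
exists bt; split; first exact: P_beta.
split; first exact: P_5.
split; first exact: P_6a.
exact: P_6b.
Qed.


Lemma part3b (P : YDPHData k) (g : Pc P -> Kc O) :
  YDPH_hom P (Rprime O) g -> Cmor (Lobj P) O (fun x => R (g x)) g.
Proof. ctx.
move=> [[gl [gm g1]] [[_ [gc ge]] gact]].
have gR : lin (fun x => R (g x)) by lin_tac.
split.
  split; first exact: gR. split; last by rewrite /= g1 R1.
  move=> x y /=; rewrite /bullet (linS gl) -R_bul; congr R.
  change (sw (Pcop P) x (fun a b => g (Pmul P a (Pact P b y))) = sw cK (g x) (fun a b => mK a (act (R b) (g y)))).
  rewrite /sw (gc x _ (fun a b => mK a (act (R b) (g y)))); last by multi_tac.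
  by rewrite big_map; apply: eq_bigr => p _; rewrite gm gact.
split.
  split; first exact: gR. split.
    move=> x U B hB; rewrite big_map.
    change (sw cH (R (g x)) B = \sum_(p <- Pcop P x) B (R (g p.1)) (R (g p.2))).
    rewrite swHR //.
    rewrite /sw (gc x _ (fun a b => B (R a) (R b))); last by multi_tac.
    by rewrite big_map.
  by move=> x; rewrite eHR; apply: ge.
split; first by split.
split; first by split.
by split.
Qed.

End Main.

Lemma part2 (k : fieldType) (O1 O2 : RBData k) (f : Hc O1 -> Hc O2) (g : Kc O1 -> Kc O2) :
  Cmor O1 O2 f g -> YDPH_hom (Rprime O1) (Rprime O2) g.
Proof. move=> [_ [_ [ga [gc [fR gact]]]]]; split=> //; split=> // x y /=.
by rewrite gact fR. Qed.

Lemma part3a (k : fieldType) (P : YDPHData k) (O : RBData k) (f : Pc P -> Hc O) (g : Pc P -> Kc O) :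
  Cmor (Lobj P) O f g -> YDPH_hom P (Rprime O) g.
Proof. move=> [_ [_ [ga [gc [fR gact]]]]]; split=> //; split=> // x y /=.
by rewrite gact -fR. Qed.

Lemma part3c (k : fieldType) (P : YDPHData k) (O : RBData k) (f : Pc P -> Hc O) (g : Pc P -> Kc O) :
  Cmor (Lobj P) O f g -> forall x, f x = Rop O (g x).
Proof. by move=> [_ [_ [_ [_ [fR _]]]]] x; rewrite -fR. Qed.

Theorem proposition4 (k : fieldType) :
  (forall O : RBData k, in_Cprime O -> is_YDPH (Rprime O)) /\
  (forall (O1 O2 : RBData k) (f : Hc O1 -> Hc O2) (g : Kc O1 -> Kc O2),
      in_Cprime O1 -> in_Cprime O2 -> Cmor O1 O2 f g ->
      YDPH_hom (Rprime O1) (Rprime O2) g) /\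
  (forall (P : YDPHData k) (O : RBData k), is_YDPH P -> in_Cprime O ->
     (forall (f : Pc P -> Hc O) (g : Pc P -> Kc O),
         Cmor (Lobj P) O f g -> YDPH_hom P (Rprime O) g) /\
     (forall g : Pc P -> Kc O,
         YDPH_hom P (Rprime O) g -> Cmor (Lobj P) O (fun x => Rop O (g x)) g) /\
     (forall (f : Pc P -> Hc O) (g : Pc P -> Kc O),
         Cmor (Lobj P) O f g -> forall x, f x = Rop O (g x))).
Proof.
split; first by move=> O hO; apply: part1.
split; first by move=> O1 O2 f g _ _; apply: part2.
move=> P O _ hO; split; first exact: part3a.
split; first exact: part3b.
exact: part3c.
Qed.
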